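(* Let $\Gamma$ be a connected $\delta$-hyperbolic graph with base vertex $x_0$, and let $x\in\Gamma$ and $n\le\ell(x)$. Let $p\in V(x,B_n)$, let $x_0,x_1,\ldots,x_{\ell(x)}$ be a geodesic from $x_0$ to $x$, and let $p_0,p_1,\ldots,p_n$ be a geodesic from $x_0$ to $p$. Then $d(x_i,p_i)\le4\delta+2$ for all $0\le i\le n$.
   Context: $\Gamma$ is identified with its vertex set with path metric $d$. It is $\delta$-hyperbolic if for every geodesic triangle with sides $[a,b],[a,c],[b,c]$ and every vertex $v\in[a,b]$ there is a vertex $w\in[a,c]\cup[b,c]$ with $d(v,w)\le\delta$. Set $\ell(x)=d(x_0,x)$ and $B_n=\{x:\ell(x)\le n\}$. For finite $B\subseteq\Gamma$ and $x\in\Gamma$, a point $p\in B$ is visible from $x$ if $d(p,x)<d(p,q)+d(q,x)$ for all $q\in B\setminus\{p\}$; $V(x,B)$ denotes the set of such points. *)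

(* Defs.v *)
From Stdlib Require Import Arith Lia ClassicalEpsilon.

Definition simple_graph {V : Type} (adj : V -> V -> Prop) : Prop :=
  (forall x y, adj x y -> adj y x) /\ (forall x, ~ adj x x).

Inductive walk {V : Type} (adj : V -> V -> Prop) : V -> V -> nat -> Prop :=
| walk_nil : forall x, walk adj x x 0
| walk_cons : forall x z y n, adj x z -> walk adj z y n -> walk adj x y (S n).

Definition connected {V : Type} (adj : V -> V -> Prop) : Prop :=
  forall x y, exists n, walk adj x y n.

(* Path metric: the least length of a walk from x to y (0 if none exists;
   irrelevant for connected graphs). *)
Definition dist {V : Type} (adj : V -> V -> Prop) (x y : V) : nat :=
  epsilon (inhabits 0)
    (fun n => walk adj x y n /\ forall m, walk adj x y m -> n <= m).

Definition geodesic {V : Type} (adj : V -> V -> Prop)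
    (g : nat -> V) (a b : V) (m : nat) : Prop :=
  g 0 = a /\ g m = b /\ m = dist adj a b /\
  (forall i, i < m -> adj (g i) (g (S i))).

(* delta-hyperbolicity via thin geodesic triangles (vertex version). *)
Definition hyperbolic {V : Type} (adj : V -> V -> Prop) (delta : nat) : Prop :=
  forall (a b c : V) (gab gac gbc : nat -> V),
    geodesic adj gab a b (dist adj a b) ->
    geodesic adj gac a c (dist adj a c) ->
    geodesic adj gbc b c (dist adj b c) ->
    forall i, i <= dist adj a b ->
      exists w : V,
        ((exists j, j <= dist adj a c /\ w = gac j) \/
         (exists j, j <= dist adj b c /\ w = gbc j)) /\
        dist adj (gab i) w <= delta.

Definition ball {V : Type} (adj : V -> V -> Prop) (x0 : V) (n : nat) : V -> Prop :=
  fun y => dist adj x0 y <= n.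

Definition visible {V : Type} (adj : V -> V -> Prop) (x : V) (B : V -> Prop) (p : V) : Prop :=
  B p /\ forall q, B q -> q <> p -> dist adj p x < dist adj p q + dist adj q x.

(* Main.v *)
Require Import Defs.
From Stdlib Require Import Arith Lia Classical ClassicalEpsilon.

Lemma walk_app {V : Type} (adj : V -> V -> Prop) x y z a b :
  walk adj x y a -> walk adj y z b -> walk adj x z (a + b).
Proof. induction 1; intros; simpl; auto. econstructor; eauto. Qed.

Lemma walk_snoc {V : Type} (adj : V -> V -> Prop) x y z n :
  walk adj x y n -> adj y z -> walk adj x z (S n).
Proof.
  intros H1 H2. replace (S n) with (n + 1) by lia. eapply walk_app; eauto.
  econstructor; eauto. constructor.
Qed.

Lemma walk_sym {V : Type} (adj : V -> V -> Prop)
  (Hs : forall x y, adj x y -> adj y x) x y n : walk adj x y n -> walk adj y x n.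
Proof. induction 1. constructor. eapply walk_snoc; eauto. Qed.

Lemma dist_spec {V : Type} (adj : V -> V -> Prop) (Hc : connected adj) x y :
  walk adj x y (dist adj x y) /\ forall m, walk adj x y m -> dist adj x y <= m.
Proof.
  unfold dist. apply epsilon_spec. destruct (Hc x y) as [n Hn]. revert Hn.
  induction n as [n IH] using (well_founded_induction lt_wf). intro Hn.
  destruct (classic (forall m, walk adj x y m -> n <= m)) as [H|H].
  - exists n; auto.
  - apply not_all_ex_not in H. destruct H as [m Hm].
    apply imply_to_and in Hm. destruct Hm as [Hm1 Hm2].
    apply (IH m); auto; lia.
Qed.

Lemma dist_le {V : Type} (adj : V -> V -> Prop) (Hc : connected adj) x y m :
  walk adj x y m -> dist adj x y <= m.
Proof. apply (proj2 (dist_spec adj Hc x y)). Qed.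

Lemma dist_tri {V : Type} (adj : V -> V -> Prop) (Hc : connected adj) x y z :
  dist adj x z <= dist adj x y + dist adj y z.
Proof.
  apply dist_le; auto. eapply walk_app; apply dist_spec; auto.
Qed.

Lemma dist_sym {V : Type} (adj : V -> V -> Prop) (Hc : connected adj)
  (Hs : forall x y, adj x y -> adj y x) x y : dist adj x y = dist adj y x.
Proof.
  apply Nat.le_antisymm; apply dist_le; auto; apply walk_sym; auto; apply dist_spec; auto.
Qed.

Lemma dist_refl {V : Type} (adj : V -> V -> Prop) (Hc : connected adj) x :
  dist adj x x = 0.
Proof. pose proof (dist_le adj Hc x x 0 (walk_nil adj x)). lia. Qed.

Lemma path_walk {V : Type} (adj : V -> V -> Prop) (g : nat -> V) m :
  (forall i, i < m -> adj (g i) (g (S i))) ->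
  forall k i, i + k <= m -> walk adj (g i) (g (i + k)) k.
Proof.
  intros H. induction k; intros i Hik.
  - rewrite Nat.add_0_r. constructor.
  - replace (i + S k) with (S (i + k)) by lia. eapply walk_snoc.
    apply IHk; lia. apply H; lia.
Qed.

Lemma path_dist {V : Type} (adj : V -> V -> Prop) (Hc : connected adj) (g : nat -> V) m :
  (forall i, i < m -> adj (g i) (g (S i))) ->
  forall i j, i <= j -> j <= m -> dist adj (g i) (g j) <= j - i.
Proof.
  intros H i j H1 H2. apply dist_le; auto.
  replace j with (i + (j - i)) at 1 by lia. apply (path_walk adj g m H); lia.
Qed.

Lemma geo_dist {V : Type} (adj : V -> V -> Prop) (Hc : connected adj) g a b m :
  geodesic adj g a b m -> forall j, j <= m -> dist adj a (g j) = j.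
Proof.
  intros [H0 [Hm [Hd Ha]]] j Hj.
  pose proof (path_dist adj Hc g m Ha 0 j ltac:(lia) Hj) as A.
  pose proof (path_dist adj Hc g m Ha j m Hj ltac:(lia)) as B.
  pose proof (dist_tri adj Hc a (g j) b) as T.
  rewrite H0 in A. rewrite Hm in B. lia.
Qed.

Lemma walk_path {V : Type} (adj : V -> V -> Prop) x y n :
  walk adj x y n -> exists g : nat -> V, g 0 = x /\ g n = y /\
    forall i, i < n -> adj (g i) (g (S i)).
Proof.
  induction 1.
  - exists (fun _ => x). repeat split; intros; lia.
  - destruct IHwalk as [g [G0 [Gn Ga]]].
    exists (fun i => match i with 0 => x | S k => g k end).
    repeat split; auto. intros [|i] Hi; simpl.
    + rewrite G0; auto.
    + apply Ga; lia.
Qed.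

Theorem mainTheorem16 (V : Type) (adj : V -> V -> Prop) (delta : nat) (x0 : V)
  (Hsimple : simple_graph adj) (Hconn : connected adj) (Hhyp : hyperbolic adj delta)
  (x : V) (n : nat) (Hn : n <= dist adj x0 x)
  (p : V) (Hp : visible adj x (ball adj x0 n) p)
  (gx : nat -> V) (Hgx : geodesic adj gx x0 x (dist adj x0 x))
  (gp : nat -> V) (Hgp : geodesic adj gp x0 p n) :
  forall i, i <= n -> dist adj (gx i) (gp i) <= 4 * delta + 2.
Proof.
  destruct Hsimple as [Hs _].
  pose proof Hgp as Hgp'. destruct Hgp' as [gp0 [gpn [Hnd Hgpa]]].
  pose proof Hgx as Hgx'. destruct Hgx' as [gx0 [gxn [_ Hgxa]]].
  destruct Hp as [Hpb Hvis].
  assert (Lp : forall i, i <= n -> dist adj x0 (gp i) = i)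
    by (apply (geo_dist adj Hconn gp x0 p n Hgp)).
  assert (Lx : forall i, i <= dist adj x0 x -> dist adj x0 (gx i) = i)
    by (apply (geo_dist adj Hconn gx x0 x _ Hgx)).
  assert (Dx : forall i j, i <= dist adj x0 x -> j <= dist adj x0 x ->
             dist adj (gx i) (gx j) <= (i - j) + (j - i)).
  { intros i j Hi Hj. destruct (le_lt_dec i j).
    - pose proof (path_dist adj Hconn gx _ Hgxa i j); lia.
    - rewrite dist_sym; auto. pose proof (path_dist adj Hconn gx _ Hgxa j i); lia. }
  assert (Dp : forall i j, i <= j -> j <= n -> dist adj (gp i) (gp j) <= j - i)
    by (intros; apply (path_dist adj Hconn gp n Hgpa); auto).
  destruct (walk_path adj p x _ (proj1 (dist_spec adj Hconn p x))) as [gb [gb0 [gbn gba]]].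
  assert (Hgb : geodesic adj gb p x (dist adj p x)) by (repeat split; auto).
  assert (Hgp2 : geodesic adj gp x0 p (dist adj x0 p)) by (rewrite <- Hnd; auto).
  assert (C : forall i, i <= n -> i + delta < n -> dist adj (gx i) (gp i) <= 2 * delta).
  { intros i Hi Hid.
    destruct (Hhyp x0 p x gp gx gb Hgp2 Hgx Hgb i ltac:(lia)) as
      [w [[[j [Hj ->]] | [j [Hj ->]]] Hw]].
    - pose proof (Lp i Hi). pose proof (Lx j Hj).
      pose proof (dist_tri adj Hconn x0 (gp i) (gx j)).
      pose proof (dist_tri adj Hconn x0 (gx j) (gp i)).
      rewrite (dist_sym adj Hconn Hs (gx j) (gp i)) in *.
      pose proof (Dx i j ltac:(lia) Hj).
      pose proof (dist_tri adj Hconn (gx i) (gx j) (gp i)).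
      rewrite (dist_sym adj Hconn Hs (gx j) (gp i)) in *. lia.
    - exfalso.
      pose proof (Lp i Hi).
      pose proof (dist_tri adj Hconn x0 (gp i) (gb j)).
      assert (Hl : n <= dist adj x0 (gb j)).
      { destruct (le_lt_dec (dist adj x0 (gb j)) n) as [Hb|]; [|lia].
        destruct j as [|j].
        - rewrite gb0. unfold ball in Hpb. rewrite <- Hnd. lia.
        - assert (Hne : gb (S j) <> p).
          { intro E. pose proof (geo_dist adj Hconn gb p x _ Hgb (S j) Hj) as G.
            rewrite E, dist_refl in G; auto. lia. }
          pose proof (Hvis (gb (S j)) Hb Hne) as Hv.
          pose proof (geo_dist adj Hconn gb p x _ Hgb (S j) Hj) as G.
          pose proof (path_dist adj Hconn gb _ gba (S j) (dist adj p x) Hj ltac:(lia)) as G2.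
          rewrite gbn in G2. lia. }
      lia. }
  intros i Hi.
  destruct (le_lt_dec n (i + delta)) as [Hid|Hid]; [|pose proof (C i Hi Hid); lia].
  destruct (le_lt_dec n delta) as [Hnd2|Hnd2].
  - pose proof (dist_tri adj Hconn (gx i) x0 (gp i)).
    rewrite (dist_sym adj Hconn Hs (gx i) x0) in *.
    rewrite Lx in * by lia. rewrite Lp in * by lia. lia.
  - set (k := n - delta - 1).
    pose proof (C k ltac:(lia) ltac:(lia)).
    pose proof (dist_tri adj Hconn (gx i) (gx k) (gp i)).
    pose proof (dist_tri adj Hconn (gx k) (gp k) (gp i)).
    pose proof (Dx i k ltac:(lia) ltac:(lia)).
    pose proof (Dp k i ltac:(lia) Hi). lia.
Qed.
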